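(* Let $H$, $L$ be as in the context with $L\mid Z$, let $k$ be an integer with $1\le k\le L-1$, and let $\mathcal T_0=\{x\in[MZ): x\equiv 0\pmod L\}$. Then $(1,\mathcal T_0)$ is a feasible solution with layer distance $d(1,\mathcal T_0)\ge k$ if and only if for every $j\in[NZ)$: (i) $\mathcal N(v_j)\cap\mathcal N(v_{\pi^t(j)})=\emptyset$ for all $t\in[1,k)$, and (ii) $\big|\{x\in\bigcup_{t\in[k)}\mathcal N(v_{\pi^t(j)}): x\equiv 0\pmod L\}\big|\le 1$.
   Context: Notation: $[a,b)=\{a,\dots,b-1\}$, $[n)=[0,n)$. Let $M,N,Z$ be positive integers and let $H$ be a binary $MZ\times NZ$ matrix made of $M\times N$ blocks, each a $Z\times Z$ circulant; assume $H$ has no zero row and no two identical rows. For $j\in[NZ)$, $\mathcal N(v_j)=\{i\in[MZ):H[i][j]=1\}$. For an index $i$ (a row index in $[MZ)$ or a column index in $[NZ)$) and an integer $s$, $\pi^s(i)=Z\lfloor i/Z\rfloor+((i+s)\bmod Z)$; for a set $\mathcal T$ of row indices, $\pi^s(\mathcal T)=\{\pi^s(x):x\in\mathcal T\}$. For $\mathcal A\subseteq[MZ)$, $H_{\mathcal A}$ is the submatrix of rows indexed by $\mathcal A$; $\omega(A)$ is the maximum Hamming weight of a column of $A$ ($\omega$ of the empty matrix is $0$). Fix an integer $L>1$. A pair $(S,\mathcal T_0)$ ($S$ a positive integer, $\mathcal T_0\subseteq[MZ)$) is a feasible solution if, with $\mathcal T_l=\pi^{lS}(\mathcal T_0)$ for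 $l\in[L)$, the sets $\mathcal T_0,\dots,\mathcal T_{L-1}$ are pairwise disjoint with union $[MZ)$. The layer distance $d(S,\mathcal T_0)$ is the largest $l\in[L)$ such that the vertical stack of $H_{\mathcal T_0},\dots,H_{\mathcal T_{l-1}}$ has maximum column weight at most $1$. *)

(* Defs.v *)
From mathcomp Require Import all_boot all_order all_algebra.
Set Implicit Arguments. Unset Strict Implicit. Unset Printing Implicit Defensive.

Definition piZ (Z s i : nat) : nat := Z * (i %/ Z) + (i + s) %% Z.

(* pi^s as a map on indices in [K*Z) (K = M for rows, N for columns).
   piZ always stays in [K*Z), so the default of insubd is never used. *)
Definition piO (K Z : nat) (s : nat) (i : 'I_(K * Z)) : 'I_(K * Z) :=
  insubd i (piZ Z s i).

Definition pi_set (M Z s : nat) (T : {set 'I_(M * Z)}) : {set 'I_(M * Z)} :=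
  [set piO s x | x in T].

(* H is made of M x N blocks, each a Z x Z circulant:
   within a block, the entry only depends on (column - row) mod Z. *)
Definition circulant_blocks (M N Z : nat) (H : 'M[bool]_(M * Z, N * Z)) : Prop :=
  forall (i i' : 'I_(M * Z)) (j j' : 'I_(N * Z)),
    i %/ Z = i' %/ Z -> j %/ Z = j' %/ Z ->
    (j %% Z + Z - i %% Z) %% Z = (j' %% Z + Z - i' %% Z) %% Z ->
    H i j = H i' j'.

Definition no_zero_row (M N Z : nat) (H : 'M[bool]_(M * Z, N * Z)) : Prop :=
  forall i : 'I_(M * Z), exists j : 'I_(N * Z), H i j.

Definition distinct_rows (M N Z : nat) (H : 'M[bool]_(M * Z, N * Z)) : Prop :=
  forall i i' : 'I_(M * Z), (forall j, H i j = H i' j) -> i = i'.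

Definition Nv (M N Z : nat) (H : 'M[bool]_(M * Z, N * Z)) (j : 'I_(N * Z))
  : {set 'I_(M * Z)} := [set i | H i j].

Definition layer (M Z S : nat) (T0 : {set 'I_(M * Z)}) (l : nat) :=
  pi_set (l * S) T0.

Definition feasible (M Z L S : nat) (T0 : {set 'I_(M * Z)}) : Prop :=
  0 < S /\
  (forall l1 l2, l1 < L -> l2 < L -> l1 != l2 ->
     [disjoint layer S T0 l1 & layer S T0 l2]) /\
  \bigcup_(l < L) layer S T0 l = [set: 'I_(M * Z)].

(* Weight of column j of the vertical stack of H_{T_0},...,H_{T_{l-1}} *)
Definition stack_col_weight (M N Z S : nat) (H : 'M[bool]_(M * Z, N * Z))
  (T0 : {set 'I_(M * Z)}) (l : nat) (j : 'I_(N * Z)) : nat :=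
  \sum_(m < l) #|[set i in layer S T0 m | H i j]|.

Definition stack_ok (M N Z S : nat) (H : 'M[bool]_(M * Z, N * Z))
  (T0 : {set 'I_(M * Z)}) (l : nat) : bool :=
  [forall j : 'I_(N * Z), stack_col_weight S H T0 l j <= 1].

(* d(S, T_0): largest l in [L) with stack_ok l (l = 0 always qualifies) *)
Definition layer_distance (M N Z L S : nat) (H : 'M[bool]_(M * Z, N * Z))
  (T0 : {set 'I_(M * Z)}) : nat :=
  \max_(l < L | stack_ok S H T0 l) (l : nat).

(* Main.v *)
Require Import Defs.
From mathcomp Require Import all_boot all_order all_algebra.
From mathcomp Require Import zify.


Lemma piZ_lt K Z s i : 0 < Z -> i < K * Z -> piZ Z s i < K * Z.
Proof.
move=> Z0 iK; rewrite /piZ.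
have h1 : i %/ Z < K by rewrite ltn_divLR.
have h2 : (i + s) %% Z < Z by rewrite ltn_mod.
have : (i %/ Z).+1 * Z <= K * Z by rewrite leq_mul2r h1 orbT.
rewrite mulSn mulnC; lia.
Qed.

Lemma piO_val K Z s (i : 'I_(K * Z)) : 0 < Z -> val (piO s i) = piZ Z s i.
Proof. by move=> Z0; rewrite /piO insubdK //; apply: piZ_lt. Qed.

Lemma piZ_div Z s i : 0 < Z -> piZ Z s i %/ Z = i %/ Z.
Proof.
by move=> Z0; rewrite /piZ [Z * _]mulnC divnMDl // (divn_small (ltn_pmod _ Z0)) addn0.
Qed.

Lemma piZ_mod Z s i : piZ Z s i %% Z = (i + s) %% Z.
Proof. by rewrite /piZ mulnC modnMDl modn_mod. Qed.

Lemma piZ_comp Z a b i : 0 < Z -> piZ Z a (piZ Z b i) = piZ Z (b + a) i.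
Proof.
move=> Z0; rewrite {1}/piZ piZ_div // -modnDml piZ_mod modnDml -addnA.
by rewrite /piZ.
Qed.

Lemma piZ_id Z c i : piZ Z (c * Z) i = i.
Proof. by rewrite /piZ [i + _]addnC modnMDl [Z * _]mulnC -divn_eq. Qed.

Lemma piO_comp K Z a b (i : 'I_(K * Z)) : 0 < Z ->
  piO a (piO b i) = piO (b + a) i.
Proof. by move=> Z0; apply: val_inj; rewrite !piO_val // piZ_comp. Qed.

Lemma piO_id K Z c (i : 'I_(K * Z)) : 0 < Z -> piO (c * Z) i = i.
Proof. by move=> Z0; apply: val_inj; rewrite !piO_val // piZ_id. Qed.

Lemma piO_K K Z s (i : 'I_(K * Z)) : 0 < Z -> piO (Z - s %% Z) (piO s i) = i.
Proof.
move=> Z0; rewrite piO_comp //.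
have -> : s + (Z - s %% Z) = (s %/ Z).+1 * Z.
  have := ltn_pmod s Z0; rewrite {1}(divn_eq s Z) mulSn; lia.
exact: piO_id.
Qed.

Lemma piO_inj K Z s : 0 < Z -> injective (@piO K Z s).
Proof. by move=> Z0 x y e; rewrite -(piO_K _ _ s x Z0) e piO_K. Qed.

Lemma piO_modL K Z L s (i : 'I_(K * Z)) : 0 < Z -> L %| Z ->
  piO s i %% L = (i + s) %% L.
Proof.
move=> Z0 LZ; rewrite piO_val // /piZ.
rewrite -modnDml (eqP (dvdn_mulr _ LZ)) add0n.
by rewrite modn_dvdm.
Qed.


Lemma arithA Z a b s : 0 < Z ->
  ((a + s) %% Z + Z - (b + s) %% Z) %% Z = (a %% Z + Z - b %% Z) %% Z.
Proof.
move=> Z0; apply/eqP; rewrite -(eqn_modDr (b + s)).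
have e1 : ((a + s) %% Z + Z - (b + s) %% Z + (b + s)) %% Z = (a + s) %% Z.
  rewrite -modnDmr.
  have := ltn_pmod (b + s) Z0.
  set p := (a + s) %% Z.
  move: ((b + s) %% Z) => r hr.
  have -> : p + Z - r + r = p + Z by lia.
  by rewrite modnDr /p modn_mod.
have e2 : (a %% Z + Z - b %% Z + (b + s)) %% Z = (a + s) %% Z.
  have h : (a %% Z + Z - b %% Z + b) %% Z = a %% Z.
    rewrite -modnDmr.
    have := ltn_pmod b Z0.
    set p := a %% Z.
    move: (b %% Z) => r hr.
    have -> : p + Z - r + r = p + Z by lia.
    by rewrite modnDr /p modn_mod.
  by rewrite addnA -modnDml h modnDml.
by rewrite e1 e2.
Qed.

Lemma circ M N Z (H : 'M[bool]_(M * Z, N * Z)) s i j :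
  0 < Z -> circulant_blocks H -> H (piO s i) (piO s j) = H i j.
Proof.
move=> Z0 hC; apply: hC; rewrite ?piO_val ?piZ_div //.
by rewrite !piZ_mod arithA.
Qed.

Lemma layer_eq M Z L (l : nat) : 0 < Z -> L %| Z -> l < L ->
  layer 1 [set x : 'I_(M * Z) | x %% L == 0] l = [set y : 'I_(M * Z) | y %% L == l].
Proof.
move=> Z0 LZ lL; have LleZ : L <= Z by apply: dvdn_leq.
apply/setP => y; rewrite inE /layer /pi_set muln1.
apply/imsetP/eqP => [[x]|hy].
  rewrite inE => /eqP hx ->; rewrite piO_modL // -modnDml hx add0n modn_small //.
exists (piO (Z - l) y).
  rewrite inE piO_modL // -modnDml hy.
  have -> : l + (Z - l) = Z by lia.
  exact: LZ.
rewrite piO_comp // subnK; last lia.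
by have := piO_id M Z 1 y Z0; rewrite mul1n.
Qed.


Lemma weight_eq M N Z L (H : 'M[bool]_(M * Z, N * Z)) j k :
  0 < Z -> L %| Z -> k <= L ->
  stack_col_weight 1 H [set x : 'I_(M * Z) | x %% L == 0] k j =
  #|[set i : 'I_(M * Z) | H i j && (i %% L < k)]|.
Proof.
move=> Z0 LZ; elim: k => [|k IH] kL.
  rewrite /stack_col_weight big_ord0.
  apply/esym/eqP; rewrite cards_eq0; apply/eqP/setP => i.
  by rewrite !inE ltn0 andbF.
rewrite /stack_col_weight big_ord_recr /= -/(stack_col_weight _ _ _ _ _).
rewrite IH ?(ltnW kL) // layer_eq //.
rewrite -(cardsID [set i : 'I_(M * Z) | i %% L < k]
           [set i : 'I_(M * Z) | H i j && (i %% L < k.+1)]).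
congr (_ + _); apply: eq_card => i; rewrite !inE ltnS.
  by case: (H i j); case: ltngtP.
by case: (H i j); case: ltngtP.
Qed.

Lemma stack_okE M N Z L (H : 'M[bool]_(M * Z, N * Z)) k :
  0 < Z -> L %| Z -> k <= L ->
  stack_ok 1 H [set x : 'I_(M * Z) | x %% L == 0] k =
  [forall j, #|[set i : 'I_(M * Z) | H i j && (i %% L < k)]| <= 1].
Proof.
move=> Z0 LZ kL; apply: eq_forallb => j; by rewrite weight_eq.
Qed.

Lemma ld_eq M N Z L (H : 'M[bool]_(M * Z, N * Z)) k :
  0 < Z -> L %| Z -> 0 < k -> k < L ->
  (k <= layer_distance L 1 H [set x : 'I_(M * Z) | x %% L == 0]) <->
  (forall j, #|[set i : 'I_(M * Z) | H i j && (i %% L < k)]| <= 1).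
Proof.
move=> Z0 LZ k0 kL; split => [hk j|hj].
  apply/negPn/negP => bad.
  move: hk; apply/negP; rewrite -ltnNge.
  have : \max_(l < L | stack_ok 1 H [set x : 'I_(M * Z) | x %% L == 0] l) (l : nat) <= k.-1.
    apply/bigmax_leqP => l; rewrite stack_okE ?(ltnW (ltn_ord l)) // => /forallP /(_ j) hl.
    rewrite leqNgt; apply/negP => lt; apply: (negP bad).
    apply: leq_trans hl; apply: subset_leq_card; apply/subsetP => i; rewrite !inE.
    case/andP => -> /= ik; apply: leq_trans ik _; lia.
  rewrite /layer_distance; lia.
rewrite /layer_distance.
apply: (leq_trans _ (@leq_bigmax_cond _ _ (fun l : 'I_L => (l : nat)) (Ordinal kL) _)) => //.
by rewrite stack_okE ?(ltnW kL) //; apply/forallP.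
Qed.


Lemma feas M Z L : 0 < Z -> 1 < L -> L %| Z ->
  feasible L 1 [set x : 'I_(M * Z) | x %% L == 0].
Proof.
move=> Z0 L1 LZ; split => //; split.
  move=> l1 l2 h1 h2 ne; rewrite !layer_eq //.
  rewrite disjoint_subset; apply/subsetP => y; rewrite !inE => /eqP ->.
  exact: ne.
apply/setP => y; rewrite inE; apply/bigcupP.
have yL : y %% L < L by rewrite ltn_mod; lia.
by exists (Ordinal yL) => //; rewrite layer_eq // inE /=.
Qed.


Lemma piO_K1 K Z s (i : 'I_(K * Z)) : 0 < Z -> s <= Z -> piO (Z - s) (piO s i) = i.
Proof.
move=> Z0 sZ; rewrite piO_comp // subnKC //.
by have := piO_id K Z 1 i Z0; rewrite mul1n.
Qed.

Lemma piO_K2 K Z s (i : 'I_(K * Z)) : 0 < Z -> s <= Z -> piO s (piO (Z - s) i) = i.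
Proof.
move=> Z0 sZ; rewrite piO_comp // subnK //.
by have := piO_id K Z 1 i Z0; rewrite mul1n.
Qed.

Lemma piO_0 K Z (i : 'I_(K * Z)) : 0 < Z -> piO 0 i = i.
Proof. by move=> Z0; have := piO_id K Z 0 i Z0; rewrite mul0n. Qed.

Lemma addmod L u v w : u %% L = v %% L -> (u + w) %% L = (v + w) %% L.
Proof. by move=> e; rewrite -modnDml e modnDml. Qed.

Lemma modZ0 L Z m : L %| Z -> (Z + m) %% L = m %% L.
Proof. by move=> LZ; rewrite -modnDml (eqP LZ) add0n. Qed.

Lemma shift_ex L x a : a < L -> (x + (a + (L - x %% L))) %% L = a.
Proof.
move=> aL; have L0 : 0 < L by lia.
rewrite {1}(divn_eq x L).
have := ltn_pmod x L0.
move: (x %/ L) (x %% L) => q r hr.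
have -> : q * L + r + (a + (L - r)) = q.+1 * L + a.
  rewrite mulSn; lia.
by rewrite modnMDl modn_small.
Qed.


Lemma N1 {a t Z} : t <= a -> t <= Z -> a + (Z - t) = Z + (a - t).
Proof. lia. Qed.
Lemma N2 {k} : 0 < k -> k.-1 < k.
Proof. lia. Qed.
Lemma N3 {k t} : 0 < k -> k.-1 - t < k.
Proof. lia. Qed.
Lemma N5 {u k} : u < k -> u <= k.-1.
Proof. lia. Qed.
Lemma N6 {u k L Z} : u < k -> k < L -> L <= Z -> u <= Z.
Proof. lia. Qed.
Lemma N7 {u k L} : u < k -> k < L -> u < L.
Proof. lia. Qed.
Lemma N8 {u k L} : u <= k -> k < L -> u < L.
Proof. lia. Qed.

Section Main.
Variables (M N Z L k : nat) (H : 'M[bool]_(M * Z, N * Z)).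
Hypotheses (Z0 : 0 < Z) (LZ : L %| Z) (hC : circulant_blocks H)
  (k0 : 0 < k) (kL : k < L).

Let LleZ : L <= Z. Proof. exact: dvdn_leq. Qed.

Definition W j := [set i : 'I_(M * Z) | H i j && (i %% L < k)].

Lemma G : (forall j, #|W j| <= 1) -> forall s j (y y' : 'I_(M * Z)),
  H y j -> H y' j -> (y + s) %% L < k -> (y' + s) %% L < k -> y = y'.
Proof.
move=> P s j y y' hy hy' ry ry'.
have /card_le1_eqP h := P (piO s j).
apply: (piO_inj _ _ s Z0); apply: h; rewrite /W inE circ // piO_modL //; apply/andP; split => //.
Qed.

Lemma back (x : 'I_(M * Z)) j t m : t <= Z ->
  H (piO (Z - t) x) j = H x (piO t j) /\
  (piO (Z - t) x + m) %% L = (x + (Z - t) + m) %% L.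
Proof.
move=> tZ; split.
  by rewrite -(circ _ _ _ H (Z - t) x (piO t j) Z0 hC) piO_K1.
by apply: addmod; rewrite piO_modL.
Qed.

Lemma fwd : (forall j, #|W j| <= 1) -> forall j : 'I_(N * Z),
     (forall t, 1 <= t < k -> Nv H j :&: Nv H (piO t j) = set0) /\
     #|[set x in \bigcup_(t < k) Nv H (piO t j) | x %% L == 0]| <= 1.
Proof.
have kL1 : k.-1 < L by apply: N8 kL; apply: leq_pred.
move=> P j; split.
  move=> t /andP [t1 tk]; apply/setP => x; rewrite !inE; apply/negP => /andP [h1 h2].
  have tZ : t <= Z := N6 tk kL LleZ.
  have [hy ey] := back x j t (k.-1 + (L - x %% L)) tZ.
  have h2' : H (piO (Z - t) x) j by rewrite hy.
  have ex : (x + (k.-1 + (L - x %% L))) %% L = k.-1 by apply: shift_ex.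
  have ey2 : (piO (Z - t) x + (k.-1 + (L - x %% L))) %% L = k.-1 - t.
    rewrite ey addnAC (addmod _ _ (k.-1)); last by rewrite ex modn_small.
    rewrite N1 ?(N5 tk) // modZ0 // modn_small //.
    exact: leq_ltn_trans (leq_subr _ _) kL1.
  have e : x = piO (Z - t) x.
    apply: (G P (k.-1 + (L - x %% L)) _ _ _ h1 h2'); [rewrite ex; exact: N2 | rewrite ey2; exact: N3].
  have e1 : (x + t) %% L = x %% L.
    rewrite {1}e (addmod _ _ _ _ (piO_modL _ _ _ _ _ Z0 LZ)) -addnA subnK // addnC modZ0 //.
  move: e1; rewrite -{2}[x : nat]addn0 => /eqP; rewrite eqn_modDl mod0n modn_small ?(N7 tk kL) //.
  by move/eqP => t0; move: t1; rewrite t0.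
apply/card_le1_eqP => x x'; rewrite !inE.
move=> /andP [/bigcupP [t _ hx] /eqP hx0] /andP [/bigcupP [t' _ hx'] /eqP hx0'].
rewrite inE in hx; rewrite inE in hx'.
have tZ : t <= Z := N6 (ltn_ord t) kL LleZ.
have tZ' : t' <= Z := N6 (ltn_ord t') kL LleZ.
have [hy ey] := back x j t k.-1 tZ.
have [hy' ey'] := back x' j t' k.-1 tZ'.
have [_ fy] := back x j t t tZ.
have [_ fy'] := back x' j t' t' tZ'.
have ry : forall (x : 'I_(M * Z)) (t : 'I_k), x %% L = 0 ->
    (x + (Z - t) + k.-1) %% L = k.-1 - t.
  move=> z u hz; rewrite -addnA (addmod _ _ 0); last by rewrite hz mod0n.
  rewrite add0n addnC N1 ?(N5 (ltn_ord u)) ?(N6 (ltn_ord u) kL LleZ) //.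
  rewrite modZ0 // modn_small //.
  exact: leq_ltn_trans (leq_subr _ _) kL1.
have e : piO (Z - t) x = piO (Z - t') x'.
  apply: (G P k.-1 j _ _ (etrans hy hx) (etrans hy' hx')).
    by rewrite ey ry //; apply: N3.
  by rewrite ey' ry //; apply: N3.
have r0 : forall (x : 'I_(M * Z)) (t : nat), t <= Z -> x %% L = 0 ->
    (x + (Z - t) + t) %% L = 0.
  move=> z u uZ hz; rewrite -addnA subnK // addnC modZ0 //.
have tt' : t = t' :> nat.
  have : (piO (Z - t) x + t) %% L = (piO (Z - t) x + t') %% L.
    by rewrite fy r0 // e fy' r0.
  move/eqP; rewrite eqn_modDl !modn_small ?(N7 (ltn_ord t) kL) ?(N7 (ltn_ord t') kL) //.
  by move/eqP.
by rewrite -(piO_K2 _ _ t x Z0 tZ) -(piO_K2 _ _ t' x' Z0 tZ') e tt'.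
Qed.

End Main.


Lemma N9 {r k Z} : r <= k.-1 -> k.-1 <= Z -> Z - k.-1 + (k.-1 - r) = Z - r.
Proof. lia. Qed.

Section Main2.
Variables (M N Z L k : nat) (H : 'M[bool]_(M * Z, N * Z)).
Hypotheses (Z0 : 0 < Z) (LZ : L %| Z) (hC : circulant_blocks H)
  (k0 : 0 < k) (kL : k < L).

Let LleZ : L <= Z. Proof. exact: dvdn_leq. Qed.

Lemma bwd : (forall j : 'I_(N * Z),
     (forall t, 1 <= t < k -> Nv H j :&: Nv H (piO t j) = set0) /\
     #|[set x in \bigcup_(t < k) Nv H (piO t j) | x %% L == 0]| <= 1) ->
  forall j, #|W M N Z L k H j| <= 1.
Proof.
move=> R j; apply/card_le1_eqP => y y'; rewrite /W !inE => /andP[hy ry] /andP[hy' ry'].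
have kZ : k.-1 <= Z := N6 (N2 k0) kL LleZ.
pose v := Z - k.-1.
pose j' := piO v j.
have claim : forall z : 'I_(M * Z), H z j -> z %% L < k ->
    piO (v + (k.-1 - z %% L)) z \in
      [set x in \bigcup_(t < k) Nv H (piO t j') | x %% L == 0].
  move=> z hz rz; rewrite inE; apply/andP; split.
    apply/bigcupP; exists (Ordinal (N3 (t := z %% L) k0)) => //.
    by rewrite inE /= /j' piO_comp // circ.
  rewrite piO_modL // /v N9 ?(N5 rz) // -modnDml subnKC ?(N6 rz kL LleZ) //.
have /card_le1_eqP h := (R j').2.
have e := h _ _ (claim y hy ry) (claim y' hy' ry').
have Sh : forall a b (z z' : 'I_(M * Z)), H z j -> H z' j -> a <= b -> b - a < k ->
    piO a z = piO b z' -> z = z'.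
  move=> a b z z' hz hz' ab bak ez.
  have e2 : z = piO (b - a) z'.
    by apply: (piO_inj _ _ a Z0); rewrite ez piO_comp // subnK.
  case d0 : (b - a) => [|d]; first by rewrite e2 d0 piO_0.
  have : z \in Nv H j :&: Nv H (piO (b - a) j).
    by rewrite !inE hz /= e2 circ.
  by rewrite ((R j).1 (b - a)) ?inE // d0; apply/andP; split => //; rewrite -d0.
have tk : forall r, k.-1 - r < k by move=> r; apply: N3.
case: (leqP (v + (k.-1 - y %% L)) (v + (k.-1 - y' %% L))) => lt.
  apply/esym; apply: (Sh _ _ y y' hy hy' lt _ (esym e)).
  by rewrite subnDl; apply: leq_ltn_trans (leq_subr _ _) (tk _).
apply: (Sh _ _ y' y hy' hy (ltnW lt) _ e).
by rewrite subnDl; apply: leq_ltn_trans (leq_subr _ _) (tk _).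
Qed.

End Main2.


Theorem lemma4 (M N Z L k : nat) (H : 'M[bool]_(M * Z, N * Z)) :
  0 < M -> 0 < N -> 0 < Z ->
  circulant_blocks H -> no_zero_row H -> distinct_rows H ->
  1 < L -> L %| Z -> 1 <= k <= L - 1 ->
  let T0 := [set x : 'I_(M * Z) | x %% L == 0] in
  (feasible L 1 T0 /\ k <= layer_distance L 1 H T0) <->
  (forall j : 'I_(N * Z),
     (forall t, 1 <= t < k -> Nv H j :&: Nv H (piO t j) = set0) /\
     #|[set x in \bigcup_(t < k) Nv H (piO t j) | x %% L == 0]| <= 1).
Proof.
move=> M0 N0 Z0 hC _ _ L1 LZ /andP[k1 kL1] T0.
have kL : k < L by lia.
split => [[_ hk] | R].
  apply: (fwd _ _ _ _ _ H Z0 LZ hC k1 kL).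
  exact: (proj1 (ld_eq _ _ _ _ H k Z0 LZ k1 kL) hk).
split; first exact: feas.
apply: (proj2 (ld_eq _ _ _ _ H k Z0 LZ k1 kL)).
exact: (bwd _ _ _ _ _ H Z0 LZ hC k1 kL R).
Qed.
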